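(* Fix $\theta_j\in[0,1]$ and a non-increasing function $x_{-j}^{-1}$ arising from the other contests' prize structures. Let $x_j,\tilde x_j$ be strictly decreasing interim allocation functions, and set $$\phi_0:=\Phi_j^*(\theta_j;x_j,x_{-j}^{-1}),\qquad \phi_1:=\Phi_j^*(\theta_j;\tilde x_j,x_{-j}^{-1}).$$ Assume $\phi_0>0$. Then: - if $x_j(\phi_0)\ge\tilde x_j(\phi_0)$, then $\phi_0\ge\phi_1$; - if $x_j(\phi_0)\le\tilde x_j(\phi_0)$, then $\phi_0\le\phi_1$.
   Context: Interim allocation function. For a prize structure $\vec w$ with $w_1\ge\dots\ge w_n\ge0$ ($n\ge2$), $x_{\vec w}(\phi)=\sum_kw_k\binom{n-1}{k-1}\phi^{k-1}(1-\phi)^{n-k}$ on $[0,1]$. It is strictly decreasing iff $w_1>w_n$, and constant otherwise. Inverse notation. - For an interim allocation function $x$: $x^{-1}(y):=\max\{\phi\in[0,1]:x(\phi)\ge y\}$, with $x^{-1}(y):=0$ if $x(0)<y$. - Given prize structures of contests $j'\ne j$: $x_{-j}^{-1}:=\sum_{j'\ne j}x_{j'}^{-1}$. - For contest $j$ with strictly decreasing $x_j$: $Q(y):=x_j^{-1}(y)+x_{-j}^{-1}(y)$, $Q^{-1}(q):=\sup\{y:Q(y)\ge q\}$. Equilibrium participation. $\Phi_j^*(q;x_j,x_{-j}^{-1}):=x_j^{-1}(Q^{-1}(q))$. This is the equilibrium probability that a contestant has quantile at most $q$ and enters contest $j$, in the model where contestants with quantiles $q\sim U[0,1]$ choose among contests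 and compete by effort. *)

(* Defs.v *)
From HB Require Import structures.
From mathcomp Require Import all_boot all_order all_algebra.
From mathcomp Require Import all_classical all_reals.
From mathcomp Require Import ereal.
Set Implicit Arguments. Unset Strict Implicit. Unset Printing Implicit Defensive.
Import Order.TTheory GRing.Theory Num.Theory.
Local Open Scope ring_scope.
Local Open Scope classical_set_scope.

Section Defs.
Variable R : realType.

(* A prize structure w = (w_1, ..., w_n) with n >= 2, w_1 >= ... >= w_n >= 0,
   represented as a sequence (w`_0 = w_1, ..., w`_(n-1) = w_n). *)
Definition prize_structure (w : seq R) : Prop :=
  (2 <= size w)%N /\ sorted (fun a b => b <= a) w /\ all (fun a => 0 <= a) w.

(* Interim allocation function
   x_w(phi) = sum_{k=1}^n w_k C(n-1,k-1) phi^(k-1) (1-phi)^(n-k)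
   (index shifted by one: k here ranges over 0..n-1). *)
Definition interim (w : seq R) (phi : R) : R :=
  \sum_(k < size w)
     w`_k * ('C((size w).-1, k))%:R * phi ^+ k * (1 - phi) ^+ ((size w).-1 - k).

Definition strictly_decreasing01 (f : R -> R) : Prop :=
  forall a b, 0 <= a -> a < b -> b <= 1 -> f b < f a.

(* Stated for an extended-real argument y (so that it also applies to the
   value of Q^{-1}, which is +oo when the defining set is unbounded). *)
Definition xinv (x : R -> R) (y : \bar R) : R :=
  if ((x 0)%:E < y)%E then 0
  else sup [set phi : R | 0 <= phi <= 1 /\ (y <= (x phi)%:E)%E].

(* x_{-j}^{-1}(y) := sum_{j' <> j} x_{j'}^{-1}(y), for the list of prize
   structures of the other contests. *)
Definition xinv_others (ws : seq (seq R)) (y : R) : R :=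
  \sum_(w <- ws) xinv (interim w) y%:E.

Definition Qfun (x : R -> R) (xo : R -> R) (y : R) : R := xinv x y%:E + xo y.

Definition Qinv (x : R -> R) (xo : R -> R) (q : R) : \bar R :=
  ereal_sup [set y%:E | y in [set y : R | q <= Qfun x xo y]].

Definition Phi_star (q : R) (x : R -> R) (xo : R -> R) : R :=
  xinv x (Qinv x xo q).

End Defs.

(* Main.v *)
Require Import Defs.
From HB Require Import structures.
From mathcomp Require Import all_boot all_order all_algebra.
From mathcomp Require Import all_classical all_reals.
From mathcomp Require Import ereal.
From mathcomp Require Import all_analysis.
From mathcomp Require Import lra.
Import Order.TTheory GRing.Theory Num.Theory.
Import numFieldNormedType.Exports.
Local Open Scope ring_scope.

Lemma cont_gt (R : realType) (f : R -> R) a z :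
  {for a, continuous f} -> z < f a ->
  exists2 e : R, 0 < e & forall t, `|a - t| < e -> z < f t.
Proof.
move=> fc za; have := cvgr_gt _ fc _ za.
move=> H0; have [e e0 H] := iffLR (nbhs_ballP _ _) (H0 _); exists e => // t ht; exact: H.
Qed.

Lemma cont_lt (R : realType) (f : R -> R) a z :
  {for a, continuous f} -> f a < z ->
  exists2 e : R, 0 < e & forall t, `|a - t| < e -> f t < z.
Proof.
move=> fc za; have := cvgr_lt _ fc _ za.
move=> H0; have [e e0 H] := iffLR (nbhs_ballP _ _) (H0 _); exists e => // t ht; exact: H.
Qed.

Lemma interim_cont (R : realType) (w : seq R) : continuous (interim w).
Proof.
have -> : interim w = horner (\sum_(k < size w)
   (w`_k * ('C((size w).-1, k))%:R)%:P * 'X^k * (1 - 'X)^+((size w).-1 - k)).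
  apply/funext => phi; rewrite /interim horner_sum; apply: eq_bigr => k _.
  by rewrite !hornerE.
exact: continuous_horner.
Qed.

Section XinvLemmas.
Context (R : realType).
Local Open Scope classical_set_scope.

Let T (f : R -> R) (y : \bar R) := [set phi : R | 0 <= phi <= 1 /\ (y <= (f phi)%:E)%E].

Lemma T_ub (f : R -> R) (y : \bar R) : ubound (T f y) 1.
Proof. by move=> t [/andP[_ ->]]. Qed.

Lemma T_hasub (f : R -> R) (y : \bar R) : has_ubound (T f y).
Proof. by exists 1; exact: T_ub. Qed.

Lemma xinv_ge0 (f : R -> R) (y : \bar R) : 0 <= xinv f y.
Proof.
rewrite /xinv; case: ifP => // _.
have [[t Tt]|T0] := pselect (T f y !=set0).
  by apply: le_trans (ub_le_sup (T_hasub f y) Tt); case: Tt => /andP[].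
have -> : [set phi : R | 0 <= phi <= 1 /\ (y <= (f phi)%:E)%E] = set0.
  by apply/seteqP; split => // t Tt; apply: T0; exists t.
by rewrite sup0.
Qed.

Lemma xinv_le1 (f : R -> R) (y : \bar R) : xinv f y <= 1.
Proof.
rewrite /xinv; case: ifP => // _.
have [T0|T0] := pselect (T f y !=set0).
  by apply: ge_sup => //; exact: T_ub.
have -> : [set phi : R | 0 <= phi <= 1 /\ (y <= (f phi)%:E)%E] = set0.
  by apply/seteqP; split => // t Tt; apply: T0; exists t.
by rewrite sup0.
Qed.

Lemma xinv_anti (f : R -> R) (y1 y2 : \bar R) : (y1 <= y2)%E -> xinv f y2 <= xinv f y1.
Proof.
move=> y12; rewrite {1}/xinv; case: ifP => [_|]; first exact: xinv_ge0.
move/negbT; rewrite -leNgt => y2f.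
have y1f : (y1 <= (f 0)%:E)%E by apply: le_trans y2f.
rewrite /xinv ifF; last by apply/negbTE; rewrite -leNgt.
apply: ge_sup.
  by exists 0; split => //; rewrite lexx ler01.
move=> t [t01 yt]; apply: (ub_le_sup (T_hasub f y1)); split => //.
exact: le_trans yt.
Qed.

Variable f : R -> R.
Hypothesis sd : strictly_decreasing01 f.

Lemma sd_le p : 0 <= p <= 1 -> f p <= f 0.
Proof.
case/andP => p0 p1; case: (ltrP 0 p) => [pp|]; first exact/ltW/sd.
by move=> pn; have -> : p = 0 by apply/le_anti; rewrite pn.
Qed.

Lemma xinv_ub p (y : \bar R) : 0 <= p <= 1 -> (y <= (f p)%:E)%E -> p <= xinv f y.
Proof.
move=> p01 yp; rewrite /xinv ifF; last first.
  apply/negbTE; rewrite -leNgt; apply: le_trans yp _; rewrite lee_fin.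
  exact: sd_le.
exact: (ub_le_sup (T_hasub f y)).
Qed.

Lemma xinv_fE p : 0 <= p <= 1 -> xinv f (f p)%:E = p.
Proof.
move=> p01; apply/le_anti; rewrite xinv_ub ?lexx // andbT.
rewrite /xinv ifF; last by apply/negbTE; rewrite -leNgt lee_fin sd_le.
apply: ge_sup; first by exists p; split.
move=> t [/andP[t0 t1]]; rewrite lee_fin => ft.
rewrite leNgt; apply/negP => pt.
by have := sd _ _ (proj1 (andP p01)) pt t1; rewrite ltNge ft.
Qed.

Lemma xinv_le q (y : R) : 0 <= q <= 1 -> f q < y -> xinv f y%:E <= q.
Proof.
move=> /andP[q0 q1] fq; rewrite /xinv; case: ifP => // /negbT; rewrite -leNgt => yf.
apply: ge_sup; first by exists 0; split; [rewrite lexx ler01|].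
move=> t [/andP[t0 t1]]; rewrite lee_fin => ft.
rewrite leNgt; apply/negP => qt.
have := sd _ _ q0 qt t1 => ftq.
by have := lt_trans ftq fq; rewrite ltNge ft.
Qed.

Lemma xinv_adh q (y : \bar R) : 0 <= q -> q < xinv f y ->
  exists t, [/\ 0 <= t <= 1, (y <= (f t)%:E)%E & q < t].
Proof.
move=> q0; rewrite /xinv; case: ifP => [_|]; first by rewrite ltNge q0.
move=> /negbT; rewrite -leNgt => yf qs.
have [|t [t01 yt] qt] := sup_gt _ qs; last by exists t.
by exists 0; split; first by rewrite lexx ler01.
Qed.

End XinvLemmas.

Lemma xo_anti (R : realType) (ws : seq (seq R)) (y1 y2 : R) :
  y1 <= y2 -> xinv_others ws y2 <= xinv_others ws y1.
Proof.
move=> y12; rewrite /xinv_others; apply: ler_sum => w _.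
by apply: xinv_anti; rewrite lee_fin.
Qed.

Lemma Q_anti (R : realType) (f : R -> R) (ws : seq (seq R)) (y1 y2 : R) :
  y1 <= y2 -> Qfun f (xinv_others ws) y2 <= Qfun f (xinv_others ws) y1.
Proof.
move=> y12; rewrite /Qfun; apply: lerD; last exact: xo_anti.
by apply: xinv_anti; rewrite lee_fin.
Qed.

Theorem mainTheorem11 (R : realType) (theta : R) (ws_other : seq (seq R))
    (w wt : seq R) :
  0 <= theta <= 1 ->
  (forall w', w' \in ws_other -> prize_structure w') ->
  prize_structure w -> prize_structure wt ->
  strictly_decreasing01 (interim w) ->
  strictly_decreasing01 (interim wt) ->
  let phi0 := Phi_star theta (interim w) (xinv_others ws_other) in
  let phi1 := Phi_star theta (interim wt) (xinv_others ws_other) in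
  0 < phi0 ->
  (interim wt phi0 <= interim w phi0 -> phi1 <= phi0) /\
  (interim w phi0 <= interim wt phi0 -> phi0 <= phi1).
Proof.
move=> _ _ _ _ sdx sdt; rewrite /Phi_star.
have cx := interim_cont R w; have ct := interim_cont R wt.
set x := interim w in sdx cx *.
set xt := interim wt in sdt ct *.
set xo := xinv_others ws_other.
set Y0 := Qinv x xo theta.
set Yt := Qinv xt xo theta.
move=> /=.
set phi0 := xinv x Y0.
set phi1 := xinv xt Yt.
move=> phi0p.
have phi01 : 0 <= phi0 <= 1 by rewrite xinv_ge0 xinv_le1.
have phi0n : 0 <= phi0 by rewrite ltW.
have Qx : forall p, 0 <= p <= 1 -> Qfun x xo (x p) = p + xo (x p).
  by move=> p p01; rewrite /Qfun xinv_fE.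
have Qt : forall p, 0 <= p <= 1 -> Qfun xt xo (xt p) = p + xo (xt p).
  by move=> p p01; rewrite /Qfun xinv_fE.
split.
- move=> H1; rewrite leNgt; apply/negP => lt01.
  have [t [t01 Yt_t pt]] := xinv_adh _ _ _ _ phi0n lt01.
  case/andP: t01 => t0 t1.
  pose m := (phi0 + t) / 2.
  have pm : phi0 < m by rewrite /m; lra.
  have mt : m < t by rewrite /m; lra.
  have m01 : 0 <= m <= 1 by apply/andP; split; rewrite /m; lra.
  have xtm : xt t < xt m by apply: sdt => //; lra.
  have xtm0 : xt m < x phi0.
    by apply: lt_le_trans H1; apply: sdt => //; lra.
  have [e e0 He] := cont_gt _ _ _ _ (cx phi0) xtm0.
  pose p := Num.min (phi0 + e / 2) m.
  have pp : phi0 < p by rewrite /p lt_min pm andbT; lra.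
  have pm' : p <= m by rewrite /p ge_min lexx orbT.
  have p01 : 0 <= p <= 1 by apply/andP; split; lra.
  have xmp : xt m < x p.
    apply: He; rewrite ltr0_norm; last by lra.
    rewrite opprB; have : p <= phi0 + e / 2 by rewrite /p ge_min lexx.
    lra.
  have xpY : ((x p)%:E < Y0)%E.
    rewrite ltNge; apply/negP => /(xinv_ub _ _ sdx _ _ p01); rewrite -/phi0 => hp; lra.
  have [_ [s Ss <-] xps] := ereal_sup_gt xpY.
  rewrite lte_fin in xps.
  have Stm : theta <= Qfun xt xo (xt m).
    apply: (le_trans Ss); apply: (le_trans (Q_anti _ _ _ _ _ (ltW xps))).
    rewrite Qx // Qt //; apply: lerD => //; apply: xo_anti; exact: ltW.
  have : ((xt m)%:E <= Yt)%E by apply: ereal_sup_ubound; exists (xt m).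
  move=> /le_trans /(_ Yt_t); rewrite lee_fin => h; lra.
- move=> H2.
  have YtE : (Yt <= (xt phi0)%:E)%E.
    apply: ge_ereal_sup => _ [y Sy <-]; rewrite lee_fin leNgt; apply/negP => yg.
    have [e1 e10 He1] := cont_lt _ _ _ _ (ct phi0) yg.
    have [e2 e20 He2] := cont_lt _ _ _ _ (cx phi0) (le_lt_trans H2 yg).
    pose e := Num.min e1 e2.
    have e0 : 0 < e by rewrite /e lt_min e10 e20.
    pose q := Num.max (phi0 - e / 2) 0.
    have q0 : 0 <= q by rewrite /q le_max lexx orbT.
    have qp : q < phi0 by rewrite /q gt_max phi0p andbT; lra.
    have q01 : 0 <= q <= 1 by apply/andP; split; lra.
    have dq : `|phi0 - q| < e.
      rewrite ger0_norm; last by lra.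
      have : phi0 - e / 2 <= q by rewrite /q le_max lexx.
      lra.
    have ee1 : e <= e1 by rewrite /e ge_min lexx.
    have ee2 : e <= e2 by rewrite /e ge_min lexx orbT.
    have xtq : xt q < y by apply: He1; lra.
    have xq : x q < y by apply: He2; lra.
    have [t [t01 Yt0 qt]] := xinv_adh _ x _ _ q0 qp.
    case/andP: t01 => t0 t1.
    have xtq' : x t < x q by apply: sdx.
    have Sxq : theta <= Qfun x xo (x q).
      apply: le_trans Sy _; rewrite Qx // /Qfun; apply: lerD.
        exact: xinv_le.
      by apply: xo_anti; exact: ltW.
    have : ((x q)%:E <= Y0)%E by apply: ereal_sup_ubound; exists (x q).
    move=> h; have := le_trans h Yt0; rewrite lee_fin => h2; lra.
  rewrite /phi1 /Phi_star -/Yt.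
  rewrite -{1}(xinv_fE _ _ sdt _ phi01).
  exact: xinv_anti.
Qed.
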